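(* Let $(\Gamma,M)$ be an E-GCM graph whose Coxeter group $W=W(\Gamma,M)$ is finite, with longest element $w_0$. Let $J\subseteq I_n$ and let $(w_0)_J$ be the longest element of $W_J$. Then for any $\lambda\in C_J$, every game sequence for $\lambda$ has length $\ell(w_0)-\ell((w_0)_J)$.
   Context: E-GCM $M=(M_{ij})_{i,j\in I_n}$: real, $M_{ii}=2$, $M_{ij}\le0$ ($i\ne j$), $M_{ij}\ne0\iff M_{ji}\ne0$, nonzero $M_{ij}M_{ji}$ either $\ge4$ or $=4\cos^2(\pi/m)$ with $m\ge3$ integer; nodes $\gamma_i$, adjacent iff $M_{ij}\ne0$. Positions $\lambda\in\mathbb{R}^n$; firing $\gamma_i$ allowed iff $\lambda_i>0$, replacing $\lambda_j$ by $\lambda_j-M_{ij}\lambda_i$. The numbers game fires nodes with positive population until none remain; a game sequence is the sequence of fired nodes. $W$: generators $s_i$, $s_i^2=e$, $(s_is_j)^{m_{ij}}=e$, $m_{ij}=k$ if $M_{ij}M_{ji}=4\cos^2(\pi/k)$ ($k\ge2$), $m_{ij}=\infty$ if $M_{ij}M_{ji}\ge4$; $\ell$ = length. $W_J=\langle s_j:j\in J\rangle$. $C_J$ = positions with $\lambda_j=0$ for $j\in J$ and $\lambda_i>0$ for $i\notin J$. *)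

(* Defs.v *)
From mathcomp Require Import all_boot.
From Stdlib Require Import Reals.
From Stdlib Require Import ClassicalEpsilon.

Set Implicit Arguments.
Unset Strict Implicit.
Unset Printing Implicit Defensive.

Definition EGCM (n : nat) (M : 'I_n -> 'I_n -> R) : Prop :=
  (forall i, M i i = 2%R) /\
  (forall i j, i != j -> (M i j <= 0)%R) /\
  (forall i j, i != j -> (M i j <> 0%R <-> M j i <> 0%R)) /\
  (forall i j, i != j -> M i j <> 0%R ->
      (4 <= M i j * M j i)%R \/
      exists m : nat, (3 <= m)%N /\ (M i j * M j i = 4 * (cos (PI / INR m)) ^ 2)%R).

(* Elements of W are represented by words in the generators s_i (letters in 'I_n).
   Relators: s_i s_i, and (s_i s_j)^{m_ij} whenever i <> j and
   M_ij M_ji = 4 cos^2(pi/m_ij) with m_ij >= 2 integer (m_ij = infinity otherwise,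
   i.e. no relator). *)
Definition cox_relator (n : nat) (M : 'I_n -> 'I_n -> R) (r : seq 'I_n) : Prop :=
  (exists i, r = [:: i; i]) \/
  (exists (i j : 'I_n) (k : nat), i != j /\ (2 <= k)%N /\
      (M i j * M j i = 4 * (cos (PI / INR k)) ^ 2)%R /\
      r = flatten (nseq k [:: i; j])).

(* Equality in W: the congruence on words generated by the relators
   (each generator is an involution, so words over the s_i suffice). *)
Inductive coxeq (n : nat) (M : 'I_n -> 'I_n -> R) : seq 'I_n -> seq 'I_n -> Prop :=
  | coxeq_refl w : coxeq M w w
  | coxeq_sym u v : coxeq M u v -> coxeq M v u
  | coxeq_trans u v w : coxeq M u v -> coxeq M v w -> coxeq M u w
  | coxeq_rel u r v : cox_relator M r -> coxeq M (u ++ r ++ v) (u ++ v).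

Definition cox_finite (n : nat) (M : 'I_n -> 'I_n -> R) : Prop :=
  exists L : seq (seq 'I_n), forall w, exists2 u, u \in L & coxeq M w u.

Definition pb (P : Prop) : bool :=
  if excluded_middle_informative P then true else false.

Lemma coxlen_ex (n : nat) (M : 'I_n -> 'I_n -> R) (w : seq 'I_n) :
  exists l, pb (exists w', coxeq M w w' /\ size w' = l).
Proof.
  exists (size w); rewrite /pb; case: excluded_middle_informative => // [[]].
  by exists w; split => //; exact: coxeq_refl.
Qed.

Definition coxlen (n : nat) (M : 'I_n -> 'I_n -> R) (w : seq 'I_n) : nat :=
  ex_minn (coxlen_ex M w).

(* w represents a longest element (w.r.t. the length l of W) among the elements
   of W represented by words satisfying P.  With P = (fun _ => True) this is the
   longest element of W; with P = (all (mem J)) it is the longest element of the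
   standard parabolic subgroup W_J = <s_j : j in J>. *)
Definition longest_in (n : nat) (M : 'I_n -> 'I_n -> R)
    (P : seq 'I_n -> Prop) (w : seq 'I_n) : Prop :=
  P w /\ forall u, P u -> (coxlen M u <= coxlen M w)%N.

Definition fire (n : nat) (M : 'I_n -> 'I_n -> R) (lam : 'I_n -> R) (i : 'I_n)
  : 'I_n -> R := fun j => (lam j - M i j * lam i)%R.

Fixpoint play (n : nat) (M : 'I_n -> 'I_n -> R) (lam : 'I_n -> R) (s : seq 'I_n)
  : 'I_n -> R :=
  match s with
  | [::] => lam
  | i :: s' => play M (fire M lam i) s'
  end.

Fixpoint legal (n : nat) (M : 'I_n -> 'I_n -> R) (lam : 'I_n -> R) (s : seq 'I_n)
  : Prop :=
  match s with
  | [::] => True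
  | i :: s' => (0 < lam i)%R /\ legal M (fire M lam i) s'
  end.

Definition terminal (n : nat) (lam : 'I_n -> R) : Prop :=
  forall i, (lam i <= 0)%R.

Definition finite_game_seq (n : nat) (M : 'I_n -> 'I_n -> R) (lam : 'I_n -> R)
    (s : seq 'I_n) : Prop :=
  legal M lam s /\ terminal (play M lam s).

Definition infinite_game_seq (n : nat) (M : 'I_n -> 'I_n -> R) (lam : 'I_n -> R)
    (f : nat -> 'I_n) : Prop :=
  forall k, (0 < play M lam (mkseq f k) (f k))%R.

Definition in_C (n : nat) (J : {set 'I_n}) (lam : 'I_n -> R) : Prop :=
  forall j, (j \in J -> lam j = 0%R) /\ (j \notin J -> (0 < lam j)%R).

(* Main.v *)
Require Import Defs.
From mathcomp Require Import all_boot.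
From Stdlib Require Import Reals.
From Stdlib Require Import Lra Lia FunctionalExtensionality ClassicalEpsilon.
From mathcomp Require Import zify.
Set Warnings "-notation-overridden".
Set Implicit Arguments.
Unset Strict Implicit.
Unset Printing Implicit Defensive.



Section Basics.
Variable n : nat.
Variable M : 'I_n -> 'I_n -> R.

Lemma coxeq_cong a u v b : coxeq M u v -> coxeq M (a ++ u ++ b) (a ++ v ++ b).
Proof.
elim=> [w|u1 v1 _ IH|u1 v1 w1 _ IH1 _ IH2|u1 r v1 Hr].
- exact: coxeq_refl.
- exact: coxeq_sym.
- exact: coxeq_trans IH1 IH2.
- rewrite -!catA. have -> : a ++ u1 ++ r ++ v1 ++ b = (a ++ u1) ++ r ++ (v1 ++ b) by rewrite !catA.
  have -> : a ++ u1 ++ v1 ++ b = (a ++ u1) ++ (v1 ++ b) by rewrite !catA.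
  exact: coxeq_rel.
Qed.

Lemma coxeq_catl a u v : coxeq M u v -> coxeq M (a ++ u) (a ++ v).
Proof. by move=> H; have := coxeq_cong a [::] H; rewrite !cats0. Qed.

Lemma coxeq_catr u v b : coxeq M u v -> coxeq M (u ++ b) (v ++ b).
Proof. by move=> H; have := coxeq_cong [::] b H. Qed.

Lemma coxeq_ii a i b : coxeq M (a ++ [:: i; i] ++ b) (a ++ b).
Proof. apply: coxeq_rel; left; by exists i. Qed.

Lemma coxeq_ii0 i : coxeq M [:: i; i] [::].
Proof. by have := coxeq_ii [::] i [::]. Qed.

Lemma coxeq_rev u : coxeq M (u ++ rev u) [::].
Proof.
elim: u => [|i u IH] /=; first exact: coxeq_refl.
rewrite rev_cons -cats1.
have -> : i :: u ++ rev u ++ [:: i] = [:: i] ++ (u ++ rev u) ++ [:: i] by rewrite /= catA.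
apply: coxeq_trans (coxeq_cong [:: i] [:: i] IH) _ => /=.
exact: coxeq_ii0.
Qed.

Lemma coxeq_revl u : coxeq M (rev u ++ u) [::].
Proof. by have := coxeq_rev (rev u); rewrite revK. Qed.

Lemma coxeq_cat_nil_rev x y : coxeq M (x ++ y) [::] -> coxeq M x (rev y).
Proof.
move=> H.
apply: coxeq_trans (_ : coxeq M x (x ++ y ++ rev y)) _.
  apply: coxeq_sym; have h := coxeq_cong x [::] (coxeq_rev y); rewrite !cats0 in h; exact: h.
rewrite catA; exact: (coxeq_catr (rev y) H).
Qed.

Lemma relator_even r : cox_relator M r -> ~~ odd (size r).
Proof.
case=> [[i ->]|[i [j [k [_ [_ [_ ->]]]]]]] //.
rewrite size_flatten. have -> : shape (nseq k [:: i; j]) = nseq k 2 by elim: k => //= k ->.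
elim: k => //= k IH. by rewrite /sumn /= in IH *; rewrite oddD IH.
Qed.

Lemma coxeq_odd u v : coxeq M u v -> odd (size u) = odd (size v).
Proof.
elim=> [w|u1 v1 _ IH|u1 v1 w1 _ IH1 _ IH2|u1 r v1 Hr].
- by [].
- by rewrite IH.
- by rewrite IH1 IH2.
- rewrite !size_cat !oddD. by rewrite (negbTE (relator_even Hr)).
Qed.

Lemma pbP (P : Prop) : reflect P (pb P).
Proof. rewrite /pb; case: excluded_middle_informative => H; constructor => //. Qed.

Lemma coxlen_spec u : exists2 w, coxeq M u w & size w = coxlen M u.
Proof.
rewrite /coxlen; case: ex_minnP => m /pbP [w [H1 H2]] _. by exists w.
Qed.

Lemma coxlen_min u w : coxeq M u w -> (coxlen M u <= size w)%N.
Proof.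
rewrite /coxlen; case: ex_minnP => m _ Hmin Hw.
apply: Hmin; apply/pbP; by exists w.
Qed.

Lemma coxlen_eq u v : coxeq M u v -> coxlen M u = coxlen M v.
Proof.
move=> H; apply/eqP; rewrite eqn_leq.
apply/andP; split.
- have [w Hw <-] := coxlen_spec v. exact: coxlen_min (coxeq_trans H Hw).
- have [w Hw <-] := coxlen_spec u. exact: coxlen_min (coxeq_trans (coxeq_sym H) Hw).
Qed.

Lemma coxlen_size u : (coxlen M u <= size u)%N.
Proof. exact: coxlen_min (coxeq_refl _ _). Qed.

Lemma coxlen_cat u v : (coxlen M (u ++ v) <= coxlen M u + coxlen M v)%N.
Proof.
have [w Hw <-] := coxlen_spec u. have [w' Hw' <-] := coxlen_spec v.
rewrite -size_cat; apply: coxlen_min.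
apply: coxeq_trans (coxeq_catr v Hw) _. exact: coxeq_catl.
Qed.

Lemma coxlen_odd u : odd (coxlen M u) = odd (size u).
Proof. have [w Hw <-] := coxlen_spec u. by rewrite (coxeq_odd Hw). Qed.

Lemma coxlen0 u : coxlen M u = 0%N -> coxeq M u [::].
Proof. have [w Hw] := coxlen_spec u => <- /size0nil Hw0. by rewrite Hw0 in Hw. Qed.

Lemma coxlen_rcons_le u i : (coxlen M (u ++ [:: i]) <= (coxlen M u).+1)%N.
Proof. have := coxlen_cat u [:: i]. have := coxlen_size [:: i]. simpl. lia. Qed.

Lemma coxlen_rcons_ge u i : (coxlen M u <= (coxlen M (u ++ [:: i])).+1)%N.
Proof.
have H : coxeq M u ((u ++ [:: i]) ++ [:: i]).
  rewrite -catA /=; apply: coxeq_sym. have h := coxeq_ii u i [::]; rewrite !cats0 in h; exact: h.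
rewrite (coxlen_eq H). exact: coxlen_rcons_le.
Qed.

Lemma coxlen_rcons_neq u i : coxlen M (u ++ [:: i]) != coxlen M u.
Proof.
apply/negP => /eqP H. have := coxlen_odd (u ++ [:: i]). rewrite H coxlen_odd size_cat /= addn1 /=.
by case: (odd (size u)).
Qed.

Lemma coxlen_last u : coxlen M u <> 0%N ->
  exists u' i, [/\ coxeq M u (u' ++ [:: i]), coxlen M u' = (coxlen M u).-1 &
     coxlen M (u' ++ [:: i]) = coxlen M u].
Proof.
move=> H0. have [w Hw Hs] := coxlen_spec u.
case/lastP: w Hw Hs => [|w i] Hw Hs; first by rewrite -Hs in H0.
exists w, i; rewrite -cats1 in Hw Hs. rewrite -(coxlen_eq Hw); split => //.
have := coxlen_size w. have := coxlen_rcons_le w i. rewrite (coxlen_eq Hw) in Hs *.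
rewrite -Hs size_cat /=. rewrite -(coxlen_eq Hw) in Hs *. lia.
Qed.

End Basics.



Fixpoint EO (d : R) (k : nat) : R * R :=
  match k with
  | 0 => (1%R, 0%R)
  | k'.+1 => let p := EO d k' in ((d * (p.1 - p.2) - p.1)%R, (p.1 - p.2)%R)
  end.
Definition Ec d k := (EO d k).1.
Definition Oc d k := (EO d k).2.

Lemma Ec0 d : Ec d 0 = 1%R. Proof. by []. Qed.
Lemma Oc0 d : Oc d 0 = 0%R. Proof. by []. Qed.
Lemma OcS d k : Oc d k.+1 = (Ec d k - Oc d k)%R. Proof. by []. Qed.
Lemma EcS d k : Ec d k.+1 = (d * Oc d k.+1 - Ec d k)%R. Proof. by []. Qed.

Lemma sin_sum x t : (sin (x + t) + sin (x - t) = 2 * sin x * cos t)%R.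
Proof. rewrite sin_plus sin_minus; ring. Qed.

Lemma EO_sin t k :
  (Ec (4 * cos t ^ 2) k * sin t = sin ((2 * INR k + 1) * t))%R /\
  (Oc (4 * cos t ^ 2) k * sin (2 * t) = sin ((2 * INR k) * t))%R.
Proof.
elim: k => [|k [IHE IHO]].
  rewrite Ec0 Oc0 /= Rmult_0_r Rplus_0_l Rmult_1_l Rmult_0_l Rmult_0_l sin_0. by rewrite Rmult_1_l.
have HO : (Oc (4 * cos t ^ 2) k.+1 * sin (2 * t) = sin ((2 * INR k.+1) * t))%R.
  rewrite OcS Rmult_minus_distr_r IHO sin_2a.
  have := sin_sum ((2 * INR k + 1) * t) t. rewrite S_INR.
  have -> : ((2 * INR k + 1) * t + t = (2 * (INR k + 1)) * t)%R by ring.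
  have -> : ((2 * INR k + 1) * t - t = (2 * INR k) * t)%R by ring.
  rewrite -IHE. nra.
split => //.
rewrite EcS. 
have -> : (((4 * cos t ^ 2) * Oc (4 * cos t ^ 2) k.+1 - Ec (4 * cos t ^ 2) k) * sin t
   = 2 * cos t * (Oc (4 * cos t ^ 2) k.+1 * (2 * sin t * cos t)) - Ec (4 * cos t ^ 2) k * sin t)%R by ring.
rewrite -sin_2a HO IHE.
have := sin_sum ((2 * INR k.+1) * t) t. rewrite S_INR.
have -> : ((2 * (INR k + 1)) * t + t = (2 * (INR k + 1) + 1) * t)%R by ring.
have -> : ((2 * (INR k + 1)) * t - t = (2 * INR k + 1) * t)%R by ring.
lra.
Qed.

Lemma Ec_pos_big d k : (4 <= d)%R -> (0 <= Oc d k /\ 2 * Oc d k <= Ec d k)%R.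
Proof.
move=> Hd; elim: k => [|k [H1 H2]]; first by rewrite Ec0 Oc0; lra.
rewrite EcS OcS. split; first lra.
have : (0 <= (d - 3) * (Ec d k - 2 * Oc d k))%R by apply: Rmult_le_pos; lra.
have : (0 <= (d - 4) * Oc d k)%R by apply: Rmult_le_pos; lra.
nra.
Qed.

Definition theta (m : nat) := (PI / INR m)%R.

Lemma theta_facts m : (2 <= m)%N -> (0 < theta m /\ 2 * theta m <= PI)%R.
Proof.
move=> Hm. have Hm' : (2 <= INR m)%R by have := le_INR 2 m; simpl; apply; lia.
have := PI_RGT_0. rewrite /theta. split.
  apply: Rdiv_lt_0_compat; lra.
apply/(Rmult_le_reg_r (INR m)); first lra.
field_simplify; try lra. nra.
Qed.

Lemma Ec_pos m k : (2 <= m)%N -> (k.*2.+1 <= m)%N ->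
  (0 <= Ec (4 * cos (theta m) ^ 2) k)%R.
Proof.
move=> Hm Hk. have [Ht1 Ht2] := theta_facts Hm.
have [HE _] := EO_sin (theta m) k.
have Hs : (0 < sin (theta m))%R by apply: sin_gt_0; lra.
have Hs2 : (0 <= sin ((2 * INR k + 1) * theta m))%R.
  apply: sin_ge_0; first by have := pos_INR k; nra.
  rewrite /theta. have Hm' : (0 < INR m)%R by apply: lt_0_INR; lia.
  have Hk' : (2 * INR k + 1 <= INR m)%R.
    have := le_INR (k.*2.+1) m. rewrite S_INR -addnn plus_INR => H.
    have : (INR k + INR k + 1 <= INR m)%R by apply: H; lia. lra.
  have := PI_RGT_0. 
  have -> : ((2 * INR k + 1) * (PI / INR m) = PI * ((2 * INR k + 1) / INR m))%R by field; lra.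
  move=> Hpi. rewrite -{2}(Rmult_1_r PI). apply: Rmult_le_compat_l; first lra.
  apply/(Rmult_le_reg_r (INR m)) => //. field_simplify; lra.
rewrite -HE in Hs2. nra.
Qed.

Lemma Oc_pos m k : (2 <= m)%N -> (k.*2 <= m)%N ->
  (0 <= Oc (4 * cos (theta m) ^ 2) k)%R.
Proof.
move=> Hm Hk.
case: k Hk => [|k] Hk; first by rewrite Oc0; lra.
case: (ltnP 2 m) => Hm3; last first.
  have Hk0 : k = 0%N by lia. subst k. rewrite OcS Ec0 Oc0; lra.
have [Ht1 Ht2] := theta_facts Hm.
have Ht3 : (2 * theta m < PI)%R.
  rewrite /theta. have Hm' : (3 <= INR m)%R.
    have := le_INR 3 m. rewrite (_ : INR 3 = 3%R); last by simpl; ring. move=> H; apply: H; lia.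
  have := PI_RGT_0 => Hpi.
  apply/(Rmult_lt_reg_r (INR m)); first lra. field_simplify; nra.
have [_ HO] := EO_sin (theta m) k.+1.
have Hs : (0 < sin (2 * theta m))%R by apply: sin_gt_0; lra.
have Hs2 : (0 <= sin ((2 * INR k.+1) * theta m))%R.
  apply: sin_ge_0; first by have := pos_INR k.+1; nra.
  rewrite /theta. have Hm' : (0 < INR m)%R by apply: lt_0_INR; lia.
  have Hk' : (2 * INR k.+1 <= INR m)%R.
    have := le_INR (k.+1.*2) m. rewrite -addnn plus_INR => H.
    have : (INR k.+1 + INR k.+1 <= INR m)%R by apply: H; lia. lra.
  have := PI_RGT_0. 
  have -> : ((2 * INR k.+1) * (PI / INR m) = PI * ((2 * INR k.+1) / INR m))%R by field; lra.
  move=> Hpi. rewrite -{2}(Rmult_1_r PI). apply: Rmult_le_compat_l; first lra.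
  apply/(Rmult_le_reg_r (INR m)) => //. field_simplify; lra.
rewrite -HO in Hs2. nra.
Qed.



Section Alt.
Variable T : Type.
Fixpoint alt (c d : T) (k : nat) : seq T :=
  if k is k'.+1 then c :: alt d c k' else [::].

Lemma alt_rcons c d k : alt c d k ++ [:: if odd k then d else c] = alt c d k.+1.
Proof.
elim: k c d => [|k IH] c d //.
rewrite [alt c d k.+1]/= /= (_ : (if ~~ odd k then d else c) = (if odd k then c else d)); last by case: (odd k).
by rewrite IH.
Qed.

Lemma alt_add c d p q : alt c d (p + q) = alt c d p ++ (if odd p then alt d c q else alt c d q).
Proof.
elim: p c d => [|p IH] c d //=. rewrite IH. by case: (odd p).
Qed.

Lemma rev_alt c d k : rev (alt c d k) = if odd k then alt c d k else alt d c k.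
Proof.
elim: k c d => [|k IH] c d //=. rewrite rev_cons IH -cats1.
case Hk: (odd k) => /=.
- by have := alt_rcons d c k; rewrite Hk.
- by have := alt_rcons c d k; rewrite Hk.
Qed.

Lemma flatten_alt c d k : flatten (nseq k [:: c; d]) = alt c d k.*2.
Proof. elim: k => [|k IH] //=. by rewrite IH. Qed.

Lemma size_alt c d k : size (alt c d k) = k.
Proof. by elim: k c d => [|k IH] c d //=; rewrite IH. Qed.
End Alt.

Section Play.
Variable n : nat.
Variable M : 'I_n -> 'I_n -> R.
Hypothesis Mdiag : forall i, M i i = 2%R.

Lemma play_cat lam u v : play M lam (u ++ v) = play M (play M lam u) v.
Proof. by elim: u lam => [|i u IH] lam //=. Qed.

Lemma play_rcons lam u i : play M lam (u ++ [:: i]) = fire M (play M lam u) i.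
Proof. by rewrite play_cat. Qed.

Lemma fire_ii lam i : fire M (fire M lam i) i = lam.
Proof. apply: functional_extensionality => j. rewrite /fire Mdiag. ring. Qed.

Lemma fire_i lam i : fire M lam i i = (- lam i)%R.
Proof. rewrite /fire Mdiag. ring. Qed.

Lemma play_rev lam s : play M (play M lam s) (rev s) = lam.
Proof.
elim: s lam => [|i s IH] lam //=. rewrite rev_cons -cats1 play_rcons IH. exact: fire_ii.
Qed.

Lemma fire_zero lam i : lam i = 0%R -> fire M lam i = lam.
Proof. move=> H; apply: functional_extensionality => j. rewrite /fire H. ring. Qed.

Lemma play_opp lam s : play M (fun k => - lam k)%R s = (fun k => - play M lam s k)%R.
Proof.
elim: s lam => [|i s IH] lam /=; first by [].
rewrite -IH. congr play. apply: functional_extensionality => j. rewrite /fire. ring.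
Qed.

Lemma legal_cat lam u v : legal M lam (u ++ v) <-> legal M lam u /\ legal M (play M lam u) v.
Proof.
elim: u lam => [|i u IH] lam /=; first by tauto.
rewrite IH. tauto.
Qed.

Lemma legal_rcons lam u i : legal M lam (u ++ [:: i]) <-> legal M lam u /\ (0 < play M lam u i)%R.
Proof. rewrite legal_cat /=. tauto. Qed.

Lemma playD i j : forall k lam,
  play M lam (alt i j k.*2) i = (Ec (M i j * M j i) k * lam i - M j i * Oc (M i j * M j i) k * lam j)%R /\
  play M lam (alt j i k.*2.+1) i = (Ec (M i j * M j i) k * lam i - M j i * Oc (M i j * M j i) k.+1 * lam j)%R.
Proof.
elim=> [|k IH] lam.
  split; first by rewrite /= Ec0 Oc0; ring.
  by rewrite /= OcS Ec0 Oc0 /fire; ring.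
have E1 : forall lam, play M lam (alt i j k.+1.*2) i =
   (Ec (M i j * M j i) k.+1 * lam i - M j i * Oc (M i j * M j i) k.+1 * lam j)%R.
  move=> lam0.
  rewrite doubleS. change (alt i j k.*2.+2) with (i :: alt j i k.*2.+1).
  have -> : play M lam0 (i :: alt j i k.*2.+1) = play M (fire M lam0 i) (alt j i k.*2.+1) by [].
  have [_ ->] := IH (fire M lam0 i).
  rewrite EcS /fire !Mdiag. ring.
split; first exact: E1.
change (alt j i k.+1.*2.+1) with (j :: alt i j k.+1.*2).
have -> : play M lam (j :: alt i j k.+1.*2) = play M (fire M lam j) (alt i j k.+1.*2) by [].
rewrite E1. rewrite [Oc _ k.+2]OcS /fire Mdiag. ring.
Qed.

Lemma play_inv (i j l : 'I_n) (a b : R) lam x :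
  (forall c, (c == i) || (c == j) -> M c l = a * M c i + b * M c j)%R ->
  all (fun c => (c == i) || (c == j)) x ->
  (play M lam x l - a * play M lam x i - b * play M lam x j = lam l - a * lam i - b * lam j)%R.
Proof.
move=> Hc; elim: x lam => [|c x IH] lam //= /andP [Hcx Hx].
rewrite IH //. rewrite /fire (Hc c Hcx). ring.
Qed.

Lemma all_alt (i j : 'I_n) k : all (fun c => (c == i) || (c == j)) (alt i j k).
Proof.
elim: k i j => [|k IH] i j //=. rewrite eqxx /=. 
have := IH j i. apply: sub_all => c. by rewrite orbC.
Qed.

End Play.



Lemma theta_sin k : (2 <= k)%N -> (0 < sin (theta k))%R.
Proof. move=> Hk; have [H1 H2] := theta_facts Hk. apply: sin_gt_0; lra. Qed.

Lemma theta_cos2 k : (2 <= k)%N -> (4 * cos (theta k) ^ 2 < 4)%R.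
Proof.
move=> Hk; have := theta_sin Hk => Hs. have := sin2_cos2 (theta k). rewrite /Rsqr. nra.
Qed.

Lemma INRk_theta k : (2 <= k)%N -> (INR k * theta k = PI)%R.
Proof. move=> Hk. rewrite /theta. field. have : (0 < INR k)%R by apply: lt_0_INR; lia. lra. Qed.

Lemma Ec_rel k : (2 <= k)%N -> Ec (4 * cos (theta k) ^ 2) k = 1%R.
Proof.
move=> Hk. have [HE _] := EO_sin (theta k) k. have Hs := theta_sin Hk.
have : sin ((2 * INR k + 1) * theta k) = sin (theta k).
  have -> : ((2 * INR k + 1) * theta k = theta k + 2 * INR 1 * PI)%R.
    rewrite -(INRk_theta Hk) /=. ring.
  exact: sin_period.
move=> H. rewrite H in HE. 
apply: (Rmult_eq_reg_r (sin (theta k))); lra.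
Qed.

Lemma Oc_rel k : (3 <= k)%N -> Oc (4 * cos (theta k) ^ 2) k = 0%R.
Proof.
move=> Hk. have [_ HO] := EO_sin (theta k) k.
have Hs : (0 < sin (2 * theta k))%R.
  have [H1 H2] := theta_facts (ltnW Hk). apply: sin_gt_0; first lra.
  rewrite /theta. have Hm' : (3 <= INR k)%R.
    have := le_INR 3 k. rewrite (_ : INR 3 = 3%R); last by simpl; ring. move=> H; apply: H; lia.
  have := PI_RGT_0 => Hpi.
  apply/(Rmult_lt_reg_r (INR k)); first lra. field_simplify; nra.
have : sin (2 * INR k * theta k) = 0%R.
  rewrite Rmult_assoc (INRk_theta (ltnW Hk)). exact: sin_2PI.
move=> H. rewrite H in HO.
apply: (Rmult_eq_reg_r (sin (2 * theta k))); lra.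
Qed.

Lemma theta2 : cos (theta 2) = 0%R.
Proof. rewrite /theta (_ : INR 2 = 2%R); last by simpl; ring. exact: cos_PI2. Qed.

Section Rel.
Variable n : nat.
Variable M : 'I_n -> 'I_n -> R.
Hypothesis HM : EGCM M.

Lemma Mdiag i : M i i = 2%R. Proof. by case: HM. Qed.

Lemma M_zero_sym i j : i != j -> (M i j * M j i = 0)%R -> M j i = 0%R.
Proof.
move=> Hij H. case: HM => _ [_ [Hiff _]].
case: (Req_dec (M j i) 0) => // Hji.
have Hij' : M i j <> 0%R by apply/(Hiff i j Hij).
exfalso. have := Rmult_integral _ _ H. tauto.
Qed.

Lemma relator_coef i j k : i != j -> (2 <= k)%N ->
  (M i j * M j i = 4 * cos (PI / INR k) ^ 2)%R ->
  Ec (M i j * M j i) k = 1%R /\ (M j i * Oc (M i j * M j i) k = 0)%R.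
Proof.
move=> Hij Hk Hd. rewrite Hd -/(theta k). split; first exact: Ec_rel.
case: (ltnP 2 k) => Hk3; first by rewrite Oc_rel //; ring.
have Hk2 : k = 2%N by lia. subst k.
rewrite -/(theta 2) theta2 in Hd. rewrite (M_zero_sym Hij); first ring.
rewrite Hd; ring.
Qed.

Lemma relator_play r lam : cox_relator M r -> play M lam r = lam.
Proof.
case=> [[i ->]|[i [j [k [Hij [Hk [Hd ->]]]]]]].
  by rewrite /= (fire_ii (@Mdiag)).
rewrite flatten_alt.
have Hji : j != i by rewrite eq_sym.
have Hd' : (M j i * M i j = 4 * cos (PI / INR k) ^ 2)%R by rewrite Rmult_comm.
have [E1 O1] := relator_coef Hij Hk Hd.
have [E2 O2] := relator_coef Hji Hk Hd'.
have Ci : forall lam, play M lam (alt i j k.*2) i = lam i.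
  move=> lam0. have [-> _] := playD (@Mdiag) i j k lam0. rewrite E1.
  rewrite O1. ring.
have Cj' : forall lam, play M lam (alt j i k.*2) j = lam j.
  move=> lam0. have [-> _] := playD (@Mdiag) j i k lam0. rewrite E2.
  rewrite O2. ring.
have Cj : play M lam (alt i j k.*2) j = lam j.
  case: k Hk {Hd Hd' E1 O1 E2 O2 Ci Cj'} (Cj') => [//|k'] _ Cj'.
  rewrite doubleS -alt_rcons /= odd_double /= play_rcons fire_i; last exact: Mdiag.
  have := Cj' (fire M lam j). rewrite doubleS.
  change (alt j i k'.*2.+2) with (j :: alt i j k'.*2.+1).
  rewrite /= (fire_ii (@Mdiag)) fire_i; last exact: Mdiag.
  move=> ->. ring.
have Hd4 : (4 - M i j * M j i <> 0)%R.
  rewrite Hd -/(theta k). have := theta_cos2 Hk. lra.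
apply: functional_extensionality => l.
set a := ((2 * M i l - M i j * M j l) / (4 - M i j * M j i))%R.
set b := ((2 * M j l - M j i * M i l) / (4 - M i j * M j i))%R.
have Hc : forall c, (c == i) || (c == j) -> (M c l = a * M c i + b * M c j)%R.
  move=> c /orP [] /eqP ->; rewrite !Mdiag /a /b; field => //.
have := play_inv lam Hc (all_alt i j k.*2).
rewrite Ci Cj. lra.
Qed.

Lemma coxeq_play u v : coxeq M u v -> forall lam, play M lam u = play M lam v.
Proof.
elim=> [w|u1 v1 _ IH|u1 v1 w1 _ IH1 _ IH2|u1 r v1 Hr] lam.
- by [].
- by rewrite IH.
- by rewrite IH1 IH2.
- by rewrite !play_cat (relator_play _ Hr).
Qed.

End Rel.



Section Main.
Variable n : nat.
Variable M : 'I_n -> 'I_n -> R.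
Hypothesis HM : EGCM M.

Definition ascent u (i : 'I_n) := (coxlen M u < coxlen M (u ++ [:: i]))%N.
Definition dominant (lam : 'I_n -> R) := forall k, (0 <= lam k)%R.

Lemma not_ascent u i : ~~ ascent u i -> coxlen M (u ++ [:: i]) = (coxlen M u).-1.
Proof.
rewrite /ascent -leqNgt => H. have := coxlen_rcons_neq M u i. have := coxlen_rcons_ge M u i. lia.
Qed.

Lemma descent_dec v c : ~~ ascent v c ->
  exists2 v1, coxeq M v (v1 ++ [:: c]) & coxlen M v1 = (coxlen M v).-1.
Proof.
move=> H. have [w Hw Hs] := coxlen_spec M (v ++ [:: c]).
exists w.
- apply: coxeq_trans (_ : coxeq M v ((v ++ [:: c]) ++ [:: c])) _.
    rewrite -catA /=; apply: coxeq_sym. have h := coxeq_ii M v c [::]; rewrite !cats0 in h; exact: h.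
  exact: coxeq_catr.
- by rewrite -(coxlen_eq Hw) not_ascent.
Qed.

Lemma braid c d m : cox_relator M (flatten (nseq m [:: c; d])) ->
  coxeq M (alt c d m) (alt d c m).
Proof.
move=> Hr. have H0 : coxeq M (flatten (nseq m [:: c; d])) [::].
  have := coxeq_rel [::] [::] Hr. by rewrite /= cats0.
rewrite flatten_alt -addnn alt_add in H0.
have := coxeq_cat_nil_rev H0. rewrite fun_if !rev_alt. by case: (odd m).
Qed.

Lemma alt_short c d m : (1 <= m)%N -> coxeq M (alt c d m) (alt d c m) ->
  coxeq M (alt d c m) (alt c d m) ->
  forall e f, ((e == c) && (f == d)) || ((e == d) && (f == c)) ->
  (coxlen M (alt e f m.+1) <= m.-1)%N.
Proof.
move=> Hm H1 H2 e f Hef.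
have Hb : coxeq M (alt f e m) (alt e f m).
  by case/orP: Hef => /andP [/eqP -> /eqP ->].
case: m Hm H1 H2 Hb => [//|m] _ _ _ Hb.
change (alt e f m.+2) with ([:: e] ++ alt f e m.+1).
rewrite (coxlen_eq (coxeq_catl [:: e] Hb)).
change ([:: e] ++ alt e f m.+1) with ([::] ++ [:: e; e] ++ alt f e m).
rewrite (coxlen_eq (coxeq_ii M [::] e (alt f e m))) /=.
by have := coxlen_size M (alt f e m); rewrite size_alt.
Qed.

Lemma alt_long c d m N : (1 <= m)%N -> coxeq M (alt c d m) (alt d c m) -> (m < N)%N ->
  (coxlen M (alt c d N) <= N - 2)%N.
Proof.
move=> Hm Hb HN. have Hb' := coxeq_sym Hb.
have -> : N = ((N - m.+1) + m.+1)%N by lia.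
rewrite alt_add. set p := (N - m.+1)%N.
apply: leq_trans (coxlen_cat M _ _) _.
have := coxlen_size M (alt c d p); rewrite size_alt => Hp.
have Hs : (coxlen M (if odd p then alt d c m.+1 else alt c d m.+1) <= m.-1)%N.
  case: (odd p); apply: (alt_short Hm Hb Hb'); by rewrite !eqxx ?orbT.
lia.
Qed.

Definition xw (i j : 'I_n) k := alt (if odd k then j else i) (if odd k then i else j) k.

Lemma xw_cons (i j c : 'I_n) k : (c == i) || (c == j) -> (1 <= k)%N ->
  (c :: xw i j k = xw i j k.+1) \/ (exists k', k = k'.+1 /\ xw i j k = c :: xw i j k').
Proof.
move=> Hc Hk. rewrite /xw /=.
case: k Hk => [//|k] _ /=.
case/orP: Hc => /eqP ->; case Ho: (odd k) => /=.
- by right; exists k; rewrite Ho.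
- by left.
- by left.
- by right; exists k; rewrite Ho.
Qed.

Lemma xw_rcons i j k : xw i j k ++ [:: i] =
  alt (if odd k then j else i) (if odd k then i else j) k.+1.
Proof. rewrite /xw -alt_rcons. by case: (odd k). Qed.

Lemma pair_cases (i j : 'I_n) : i != j ->
  (4 <= M i j * M j i)%R \/
  exists m, [/\ (2 <= m)%N, (M i j * M j i = 4 * cos (theta m) ^ 2)%R &
                cox_relator M (flatten (nseq m [:: i; j]))].
Proof.
move=> Hij. have [_ [_ [Hiff Hcase]]] := HM.
case: (Req_dec (M i j) 0) => H0.
  have H0' : M j i = 0%R.
    case: (Req_dec (M j i) 0) => // H. exfalso. exact: (proj2 (Hiff i j Hij) H H0).
  right; exists 2%N. have Hd : (M i j * M j i = 4 * cos (theta 2) ^ 2)%R.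
    by rewrite theta2 H0 H0'; ring.
  split => //. right. exists i, j, 2%N. split => //.
case: (Hcase i j Hij H0) => [H|[m [Hm Hd]]]; first by left.
right; exists m. split => //; first by lia.
right. exists i, j, m. split => //. split => //. lia.
Qed.

Lemma pos_xw (i j : 'I_n) k mu : i != j -> (0 <= mu i)%R -> (0 <= mu j)%R ->
  (k.+1 <= coxlen M (xw i j k ++ [:: i]))%N ->
  (0 <= play M mu (xw i j k) i)%R.
Proof.
move=> Hij Hi Hj Hred.
have HMji : (0 <= - M j i)%R.
  have [_ [Hneg _]] := HM. have := Hneg j i. rewrite eq_sym => H. have := H Hij. lra.
have Hk : forall (P : nat -> Prop), (forall k', P k'.*2) -> (forall k', P k'.*2.+1) -> P k.
  move=> P H1 H2. rewrite -(odd_double_half k). case: (odd k); [exact: H2|exact: H1].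
have Hfin : forall E O : R, (0 <= E)%R -> (0 <= O)%R -> (0 <= E * mu i - M j i * O * mu j)%R.
  move=> E O HE HO. have := Rmult_le_pos _ _ HE Hi.
  have := Rmult_le_pos _ _ (Rmult_le_pos _ _ HMji HO) Hj. lra.
have Hform : forall k', (play M mu (xw i j k'.*2) i = Ec (M i j * M j i) k' * mu i - M j i * Oc (M i j * M j i) k' * mu j)%R /\
   (play M mu (xw i j k'.*2.+1) i = Ec (M i j * M j i) k' * mu i - M j i * Oc (M i j * M j i) k'.+1 * mu j)%R.
  move=> k'. rewrite /xw /= odd_double /=. exact: (playD (@Mdiag _ _ HM) i j k' mu).
case: (pair_cases Hij) => [Hd|[m [Hm Hd Hr]]].
  rewrite -(odd_double_half k). case: (odd k);
  [rewrite (proj2 (Hform _))|rewrite add0n (proj1 (Hform _))];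
  apply: Hfin; have := Ec_pos_big k./2 Hd; have := Ec_pos_big k./2.+1 Hd; lra.
have Hkm : (k.+1 <= m)%N.
  rewrite leqNgt; apply/negP => Hlt.
  have Hb := braid Hr.
  have Hb2 : coxeq M (alt (if odd k then j else i) (if odd k then i else j) m)
                     (alt (if odd k then i else j) (if odd k then j else i) m).
    case: (odd k) => //. exact: coxeq_sym.
  have := alt_long (ltnW Hm) Hb2 Hlt. rewrite -xw_rcons => H. have := leq_trans Hred H. lia.
move: Hkm. rewrite -(odd_double_half k). case: (odd k) => Hkm;
  [rewrite (proj2 (Hform _))|rewrite add0n (proj1 (Hform _)); rewrite add0n in Hkm]; rewrite Hd;
  apply: Hfin; [apply: Ec_pos|apply: Oc_pos|apply: Ec_pos|apply: Oc_pos]; lia.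
Qed.

End Main.



Section T.
Variable n : nat.
Variable M : 'I_n -> 'I_n -> R.
Hypothesis HM : EGCM M.

Lemma descent_pos v c : ~~ ascent M v c -> (1 <= coxlen M v)%N.
Proof. move=> H. have := not_ascent H. have := coxlen_rcons_neq M v c. lia. Qed.

Lemma coxeq_cancel_last u (i : 'I_n) : coxeq M ((u ++ [:: i]) ++ [:: i]) u.
Proof. rewrite -catA /=. have h := coxeq_ii M u i [::]; rewrite !cats0 in h; exact: h. Qed.

Lemma Tstep u i :
  (forall v c, (coxlen M v < coxlen M u)%N -> ascent M v c ->
     forall lam, dominant lam -> (0 <= play M lam v c)%R) ->
  ascent M u i -> forall lam, dominant lam -> (0 <= play M lam u i)%R.
Proof.
move=> IHN Hasc lam Hlam.
case Hc0: (coxlen M u == 0%N).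
  by rewrite (coxeq_play HM (coxlen0 (eqP Hc0))).
have Hc : coxlen M u <> 0%N by move/eqP; rewrite Hc0.
have [u' [j [Hu Hu' Hu'j]]] := coxlen_last Hc.
have Hij : i != j.
  apply/negP => /eqP Eij; subst j.
  have : coxeq M (u ++ [:: i]) u'.
    apply: coxeq_trans (coxeq_catr _ Hu) _. exact: coxeq_cancel_last.
  move/coxlen_eq => H. move: Hasc; rewrite /ascent H Hu'. lia.
pose Goal := (0 <= play M lam u i)%R.
have step : forall v k, (1 <= k)%N -> coxeq M u (v ++ xw i j k) ->
   (coxlen M v + k = coxlen M u)%N ->
   (forall v' k', (coxlen M v' < coxlen M v)%N -> (1 <= k')%N -> coxeq M u (v' ++ xw i j k') ->
        (coxlen M v' + k' = coxlen M u)%N -> Goal) -> Goal.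
  move=> v k Hk Huv Hlen IH.
  case: (boolP (ascent M v i && ascent M v j)) => [/andP [Hai Haj]|Hn].
  -
    have Hlt : (coxlen M v < coxlen M u)%N by lia.
    have Hvi := IHN v i Hlt Hai lam Hlam.
    have Hvj := IHN v j Hlt Haj lam Hlam.
    rewrite /Goal (coxeq_play HM Huv) play_cat.
    apply: pos_xw => //.
    have H1 : coxeq M (u ++ [:: i]) (v ++ (xw i j k ++ [:: i])).
      rewrite catA. exact: coxeq_catr.
    have := coxlen_cat M v (xw i j k ++ [:: i]). rewrite -(coxlen_eq H1).
    move: Hasc; rewrite /ascent. lia.
  have : exists2 c, (c == i) || (c == j) & ~~ ascent M v c.
    by case/nandP: Hn => H; [exists i; rewrite ?eqxx|exists j; rewrite ?eqxx ?orbT].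
  case=> c Hc1 Hc2.
  have [v1 Hv1 Hl1] := descent_dec Hc2.
  have Hpos := descent_pos Hc2.
  have Hu1 : coxeq M u (v1 ++ c :: xw i j k)
    by apply: coxeq_trans Huv _; have := coxeq_catr (xw i j k) Hv1; rewrite -catA.
  case: (xw_cons Hc1 Hk) => [Hx|[k' [Ek Hx]]].
  - apply: (IH v1 k.+1) => //; [lia | by rewrite -Hx | lia].
  - exfalso; subst k; rewrite Hx in Hu1.
    have Hu2 : coxeq M u (v1 ++ xw i j k')
      by apply: coxeq_trans Hu1 _; have := coxeq_ii M v1 c (xw i j k'); done.
    have := coxlen_eq Hu2; have := coxlen_cat M v1 (xw i j k');
       have := coxlen_size M (xw i j k'); rewrite /xw size_alt; lia.
have main : forall p v k, (coxlen M v <= p)%N -> (1 <= k)%N -> coxeq M u (v ++ xw i j k) ->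
   (coxlen M v + k = coxlen M u)%N -> Goal.
  elim=> [|p IHp] v k Hv Hk Huv Hlen; apply: (step v k) => // v' k' Hv'; first lia.
  apply: IHp; lia.
apply: (main (coxlen M u') u' 1%N) => //.
rewrite Hu'. lia.
Qed.

Theorem Tasc u i : ascent M u i -> forall lam, dominant lam -> (0 <= play M lam u i)%R.
Proof.
have : forall N u i, (coxlen M u <= N)%N -> ascent M u i -> forall lam, dominant lam -> (0 <= play M lam u i)%R.
  elim=> [|N IHN] u0 i0 Hu0; apply: Tstep => v c Hv; first lia.
  apply: IHN; lia.
by move=> H; apply: (H (coxlen M u)).
Qed.
End T.



Section Fin.
Variable n : nat.
Variable M : 'I_n -> 'I_n -> R.
Hypothesis HM : EGCM M.

Lemma Tdesc u (i : 'I_n) lam : ~~ ascent M u i -> dominant lam -> (play M lam u i <= 0)%R.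
Proof.
move=> Hd Hlam.
have Ha : ascent M (u ++ [:: i]) i.
  rewrite /ascent (coxlen_eq (coxeq_cancel_last M u i)) (not_ascent Hd).
  have := descent_pos Hd. lia.
have := Tasc HM Ha Hlam. rewrite play_rcons fire_i; last exact: Mdiag. lra.
Qed.

Lemma reduced_last t : coxlen M t <> 0%N ->
  exists t' (i : 'I_n), coxeq M t (t' ++ [:: i]) /\ ascent M t' i /\ (coxlen M t' < coxlen M t)%N.
Proof.
move=> H. have [t' [i [H1 H2 H3]]] := coxlen_last H.
exists t', i; split => //. rewrite /ascent H3 H2. split; lia.
Qed.

Lemma dom_fixed mu t : dominant mu -> dominant (play M mu t) -> play M mu t = mu.
Proof.
move=> Hmu. elim: {t} (coxlen M t) {-2}t (leqnn (coxlen M t)) => [|N IH] t Ht Hdom.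
  have H0 : coxlen M t = 0%N by lia. by rewrite (coxeq_play HM (coxlen0 H0)).
case H0: (coxlen M t == 0%N); first by rewrite (coxeq_play HM (coxlen0 (eqP H0))).
have [t' [i [H1 [H2 H3]]]] := reduced_last (elimN eqP (negbT H0)).
have Hp := Tasc HM H2 Hmu.
rewrite (coxeq_play HM H1) play_rcons in Hdom *.
have Hi := Hdom i. rewrite fire_i in Hi; last exact: Mdiag.
have E : play M mu t' i = 0%R by lra.
rewrite fire_zero // in Hdom *. apply: IH => //. lia.
Qed.

Lemma stab_J (J : {set 'I_n}) lam t : in_C J lam -> play M lam t = lam ->
  exists2 v, all (mem J) v & coxeq M t v.
Proof.
move=> HC. have Hlam : dominant lam.
  move=> k. have [H1 H2] := HC k. case: (boolP (k \in J)) => Hk; [rewrite H1 //; lra|].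
  have := H2 Hk; lra.
elim: {t} (coxlen M t) {-2}t (leqnn (coxlen M t)) => [|N IH] t Ht Hfix.
  have H0 : coxlen M t = 0%N by lia. exists [::] => //. exact: coxlen0.
case H0: (coxlen M t == 0%N); first by exists [::] => //; exact: coxlen0 (eqP H0).
have [t' [i [H1 [H2 H3]]]] := reduced_last (elimN eqP (negbT H0)).
have Hp := Tasc HM H2 Hlam.
rewrite (coxeq_play HM H1) play_rcons in Hfix.
have Hi : lam i = (- play M lam t' i)%R.
  rewrite -{1}Hfix fire_i //; exact: Mdiag.
have E : play M lam t' i = 0%R by have := Hlam i; lra.
have HiJ : i \in J.
  case: (boolP (i \in J)) => // Hn. have := (proj2 (HC i)) Hn. lra.
rewrite fire_zero // in Hfix.
have [v Hv Hcv] := IH t' ltac:(lia) Hfix.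
exists (v ++ [:: i]); first by rewrite all_cat Hv /= HiJ.
apply: coxeq_trans H1 _. exact: coxeq_catr.
Qed.

Lemma fix_J (J : {set 'I_n}) lam w : in_C J lam -> all (mem J) w -> play M lam w = lam.
Proof.
move=> HC. elim: w => [|i w IH] //= /andP [Hi Hw].
rewrite fire_zero; first exact: IH.
exact: (proj1 (HC i)).
Qed.

Lemma growth (J : {set 'I_n}) lam w s : in_C J lam -> all (mem J) w -> legal M lam s ->
  coxlen M (w ++ s) = (coxlen M w + size s)%N.
Proof.
move=> HC Hw. have Hlam : dominant lam.
  move=> k. have [H1 H2] := HC k. case: (boolP (k \in J)) => Hk; [rewrite H1 //; lra|].
  have := H2 Hk; lra.
elim/last_ind: s => [|s i IH]; first by rewrite cats0 addn0.
rewrite -cats1 legal_rcons => [[Hs Hp]].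
have Ha : ascent M (w ++ s) i.
  apply/negPn/negP => Hn. have := Tdesc Hn Hlam.
  rewrite play_cat (fix_J HC Hw). lra.
rewrite catA size_cat /=. have := coxlen_rcons_le M (w ++ s) i.
move: Ha; rewrite /ascent IH // => A B. rewrite addnA addn1. apply/eqP; rewrite eqn_leq.
apply/andP; split; [exact: B|exact: A].
Qed.

End Fin.

Theorem proposition5p3 (n : nat) (M : 'I_n -> 'I_n -> R) (J : {set 'I_n})
    (w0 w0J : seq 'I_n) (lam : 'I_n -> R) :
  EGCM M ->
  cox_finite M ->
  longest_in M (fun _ => True) w0 ->
  longest_in M (fun u => all (mem J) u) w0J ->
  in_C J lam ->
  (forall s, finite_game_seq M lam s -> size s = (coxlen M w0 - coxlen M w0J)%N) /\
  (forall f, ~ infinite_game_seq M lam f).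
Proof.
move=> HM _ [_ Hw0] [HwJ HJmax] HC.
have Hlam : dominant lam.
  move=> k. have [H1 H2] := HC k. case: (boolP (k \in J)) => Hk; [rewrite H1 //; lra|].
  have := H2 Hk; lra.
split.
- move=> s [Hleg Hterm].
  set z := play M lam s.
  set z0 := play M lam w0.
  have Hz0 : forall i, (z0 i <= 0)%R.
    move=> i. apply: Tdesc => //. rewrite /ascent -leqNgt. exact: Hw0.
  have Hdom : dominant (fun k => - z k)%R by move=> k; have := Hterm k; rewrite -/z; lra.
  have Heq := dom_fixed HM (t:=rev s ++ w0) Hdom.
  rewrite play_opp play_cat /z play_rev in Heq; last exact: Mdiag HM.
  have {}Heq := Heq (fun k => ltac:(have := Hz0 k; rewrite /z0; lra)).
  have Ez : z0 = z.
    apply: functional_extensionality => k.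
    have := f_equal (fun g => g k) Heq => /= H. rewrite /z0 /z. lra.
  have Hfix : play M lam (w0 ++ rev s) = lam.
    by rewrite play_cat -/z0 Ez /z play_rev //; exact: Mdiag HM.
  have [v Hv Hcv] := stab_J HM HC Hfix.
  have Hw0v : coxeq M w0 (v ++ s).
    apply: coxeq_trans (_ : coxeq M w0 ((w0 ++ rev s) ++ s)) _; last exact: coxeq_catr.
    rewrite -catA. apply: coxeq_sym.
    have h := coxeq_catl w0 (coxeq_revl M s). rewrite cats0 in h. exact: h.
  have H1 : coxlen M w0 = coxlen M (v ++ s) := coxlen_eq Hw0v.
  have H2 := coxlen_cat M v s.
  have H3 := coxlen_size M s.
  have H4 := HJmax v Hv.
  have H5 : coxlen M (w0J ++ s) = (coxlen M w0J + size s)%N := growth HM HC HwJ Hleg.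
  have H6 := Hw0 (w0J ++ s) I.
  have A : (coxlen M w0 <= coxlen M w0J + size s)%N.
    rewrite H1. apply: leq_trans H2 _. exact: leq_add.
  have B : (coxlen M w0J + size s <= coxlen M w0)%N.
    apply: leq_trans H6. by rewrite H5.
  lia.
- move=> f Hf.
  have Hleg : forall k, legal M lam (mkseq f k).
    elim=> [|k IH] //. rewrite mkseqS -cats1 legal_rcons. split => //.
  have H5 : coxlen M (w0J ++ mkseq f (coxlen M w0).+1) = (coxlen M w0J + size (mkseq f (coxlen M w0).+1))%N
    := growth HM HC HwJ (Hleg (coxlen M w0).+1).
  have H6 := Hw0 (w0J ++ mkseq f (coxlen M w0).+1) I.
  rewrite H5 size_mkseq in H6. lia.
Qed.
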